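(* Let $p$ and $r$ be states. Then $r$ is an extreme point of the convex set $p^{TP}=\{Tp: T\in TP(d)\}$ if and only if $\beta(r)$ is tightly thermomajorized by $\beta(p)$.
   Context: Fix an integer $d\ge 2$, an inverse temperature $\beta\in(0,\infty)$ and pairwise distinct real numbers $E_0=0,E_1,\dots,E_{d-1}$. Put $q_{m,n}=e^{-\beta(E_m-E_n)}$, $Z=\sum_j q_{j,0}$, and $g_i=q_{i,0}/Z$ (Gibbs vector). A state is a probability vector $p\in\mathbb{R}^d$. $TP(d)$ is the set of $d\times d$ real matrices with non-negative entries, columns summing to $1$, and $Tg=g$. Thermomajorization curve: for a state $p$ choose a permutation $\pi$ of $\{0,\dots,d-1\}$ with $p_{\pi(0)}/g_{\pi(0)}\ge p_{\pi(1)}/g_{\pi(1)}\ge\dots\ge p_{\pi(d-1)}/g_{\pi(d-1)}$ (the tuple $(\pi(0),\dots,\pi(d-1))$ is called a $\beta$-order of $p$). Let $x_k=\sum_{i\le k}g_{\pi(i)}$, $y_k=\sum_{i\le k}p_{\pi(i)}$. The curve $\beta(p)$ is the graph of the concave piecewise-linear function on $[0,1]$ through $(0,0),(x_0,y_0),\dots,(x_{d-1},y_{d-1})=(1,1)$ (it does not depend on the choice of $\beta$-order); its slopes are the numbers $p_i/g_i$. The elbows of $\beta(p)$ are the points $(x_k,y_k)$, $k=0,\dots,d-2$. $\beta(p)$ tightly thermomajorizes $\beta(r)$ (equivalently $\beta(r)$ is tightly thermomajorized by $\beta(p)$) if every elbow $(x,y)$ of $\beta(r)$ lies on $\beta(p)$,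 i.e. $y=\beta(p)(x)$ where $\beta(p)(\cdot)$ denotes the function whose graph is the curve. *)

(* Defs.v *)
From HB Require Import structures.
From mathcomp Require Import all_boot all_order all_algebra.
From mathcomp Require Import fingroup perm.
From mathcomp Require Import reals sequences exp.
Set Implicit Arguments. Unset Strict Implicit. Unset Printing Implicit Defensive.
Import Order.TTheory GRing.Theory Num.Theory.
Local Open Scope ring_scope.

Section Thermo.
Variables (R : realType) (d : nat).

Definition qfac (beta : R) (E : 'I_d -> R) (m n : 'I_d) : R :=
  expR (- (beta * (E m - E n))).

Definition gibbs (beta : R) (E : 'I_d -> R) (i0 : 'I_d) (i : 'I_d) : R :=
  qfac beta E i i0 / \sum_(j : 'I_d) qfac beta E j i0.

Definition is_state (p : 'I_d -> R) : Prop :=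
  (forall i, 0 <= p i) /\ \sum_(i : 'I_d) p i = 1.

Definition mxapp (T : 'M[R]_d) (p : 'I_d -> R) : 'I_d -> R :=
  fun i => \sum_(j : 'I_d) T i j * p j.

Definition is_TP (g : 'I_d -> R) (T : 'M[R]_d) : Prop :=
  [/\ forall i j, 0 <= T i j,
      forall j, \sum_(i : 'I_d) T i j = 1
    & forall i, mxapp T g i = g i].

Definition TP_orbit (g p : 'I_d -> R) (r : 'I_d -> R) : Prop :=
  exists T, is_TP g T /\ forall i, r i = mxapp T p i.

Definition is_extreme_point (S : ('I_d -> R) -> Prop) (r : 'I_d -> R) : Prop :=
  S r /\
  forall x y : 'I_d -> R, S x -> S y -> forall t : R, 0 < t -> t < 1 ->
    (forall i, r i = t * x i + (1 - t) * y i) -> forall i, x i = y i.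

Definition is_beta_order (g p : 'I_d -> R) (pi : 'S_d) : Prop :=
  forall i j : 'I_d, (i <= j)%N -> p (pi j) / g (pi j) <= p (pi i) / g (pi i).

Definition curve_x (g : 'I_d -> R) (pi : 'S_d) (k : nat) : R :=
  \sum_(i : 'I_d | (i <= k)%N) g (pi i).
Definition curve_y (p : 'I_d -> R) (pi : 'S_d) (k : nat) : R :=
  \sum_(i : 'I_d | (i <= k)%N) p (pi i).
(* x_{k-1}, with x_{-1} = 0 *)
Definition curve_x_prev (g : 'I_d -> R) (pi : 'S_d) (k : nat) : R :=
  \sum_(i : 'I_d | (i < k)%N) g (pi i).

(* The piecewise-linear function on [0,1] through (0,0),(x_0,y_0),...,(x_{d-1},y_{d-1}):
   on the k-th segment [x_{k-1}, x_k] it has slope p_{pi k}/g_{pi k}; written as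
   the sum over segments of slope * (length of [0,x] ∩ [x_{k-1},x_k]). *)
Definition curve_fun (g p : 'I_d -> R) (pi : 'S_d) (x : R) : R :=
  \sum_(k : 'I_d) (p (pi k) / g (pi k)) *
     (Num.min x (curve_x g pi k) - Num.min x (curve_x_prev g pi k)).

Definition on_curve (g p : 'I_d -> R) (x y : R) : Prop :=
  forall pi : 'S_d, is_beta_order g p pi -> y = curve_fun g p pi x.

(* beta(p) tightly thermomajorizes beta(r): every elbow (x_k,y_k), k = 0..d-2,
   of beta(r) lies on beta(p). *)
Definition tightly_thermomajorizes (g p r : 'I_d -> R) : Prop :=
  forall sigma : 'S_d, is_beta_order g r sigma ->
  forall k : nat, (k.+1 < d)%N ->
    on_curve g p (curve_x g sigma k) (curve_y r sigma k).

End Thermo.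

(* Main.v *)
Require Import Defs.
From HB Require Import structures.
From mathcomp Require Import all_boot all_order all_algebra.
From mathcomp Require Import fingroup perm.
From mathcomp Require Import reals sequences exp.
From mathcomp Require Import ring lra.
Set Implicit Arguments. Unset Strict Implicit. Unset Printing Implicit Defensive.
Import Order.TTheory GRing.Theory Num.Theory.
Local Open Scope ring_scope.


Section Aux.
Variables (R : realType) (d : nat).
Implicit Types (f : 'I_d -> R) (s : 'S_d).

Lemma cx_prevS f s (m : nat) : curve_x_prev f s m.+1 = curve_x f s m.
Proof. by apply: eq_bigl => i; rewrite ltnS. Qed.

Lemma cx_prev0 f s : curve_x_prev f s 0 = 0.
Proof. by rewrite /curve_x_prev big_pred0 // => i; rewrite ltn0. Qed.

Lemma cx_split f s (m : 'I_d) : curve_x f s m = curve_x_prev f s m + f (s m).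
Proof.
rewrite /curve_x (bigD1 m) //= addrC; congr (_ + _).
by apply: eq_bigl => i; rewrite ltn_neqAle andbC -val_eqE.
Qed.

Lemma sum_perm f s : \sum_(i : 'I_d) f (s i) = \sum_i f i.
Proof. by rewrite [RHS](reindex_inj (@perm_inj _ s)). Qed.

Lemma cx_full f s : curve_x_prev f s d = \sum_i f i.
Proof.
rewrite /curve_x_prev -(sum_perm f s); apply: eq_bigl => i; exact: ltn_ord.
Qed.

Lemma sum_sub_le (P Q : pred 'I_d) f : (forall i, 0 <= f i) ->
  (forall i, P i -> Q i) -> \sum_(i | P i) f i <= \sum_(i | Q i) f i.
Proof.
move=> f0 PQ; rewrite [X in X <= _]big_mkcond [X in _ <= X]big_mkcond /=.
apply: ler_sum => i _; case: (boolP (P i)) => Pi; first by rewrite (PQ _ Pi).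
by case: (Q i).
Qed.

Lemma cx_mono f s (m n : nat) : (forall i, 0 <= f i) -> (m <= n)%N ->
  curve_x f s m <= curve_x f s n.
Proof.
move=> f0 mn; apply: sum_sub_le => // i im; exact: leq_trans im mn.
Qed.

Lemma cxp_mono f s (m n : nat) : (forall i, 0 <= f i) -> (m <= n)%N ->
  curve_x_prev f s m <= curve_x_prev f s n.
Proof.
move=> f0 mn; apply: sum_sub_le => // i im; exact: leq_trans im mn.
Qed.

Lemma cxp_le_cx f s (m : nat) : (forall i, 0 <= f i) ->
  curve_x_prev f s m <= curve_x f s m.
Proof. move=> f0; apply: sum_sub_le => // i; exact: ltnW. Qed.

Lemma cx_ge0 f s m : (forall i, 0 <= f i) -> 0 <= curve_x f s m.
Proof. by move=> f0; apply: sumr_ge0 => i _. Qed.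

Lemma cxp_ge0 f s m : (forall i, 0 <= f i) -> 0 <= curve_x_prev f s m.
Proof. by move=> f0; apply: sumr_ge0 => i _. Qed.

Lemma cx_le_sum f s m : (forall i, 0 <= f i) -> curve_x f s m <= \sum_i f i.
Proof.
move=> f0; rewrite -(sum_perm f s) [X in _ <= X](bigID (fun i : 'I_d => (i <= m)%N)) /=.
by rewrite lerDl; apply: sumr_ge0.
Qed.

Lemma cxp_le_sum f s m : (forall i, 0 <= f i) -> curve_x_prev f s m <= \sum_i f i.
Proof.
move=> f0; rewrite -(sum_perm f s) [X in _ <= X](bigID (fun i : 'I_d => (i < m)%N)) /=.
by rewrite lerDl; apply: sumr_ge0.
Qed.

Definition Fs (g : 'I_d -> R) s (l : nat) (x : R) :=
  Num.min x (curve_x g s l) - Num.min x (curve_x_prev g s l).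

Lemma min_cases (x a : R) : (Num.min x a = x /\ x <= a) \/ (Num.min x a = a /\ a <= x).
Proof.
by case: (lerP x a) => h; [left|right]; split => //; exact: ltW.
Qed.

Lemma Fs_tele (g : 'I_d -> R) s x : (forall i, 0 <= g i) -> \sum_i g i = 1 ->
  0 <= x <= 1 -> \sum_(l : 'I_d) Fs g s l x = x.
Proof.
move=> g0 g1 /andP[x0 x1].
rewrite -(big_mkord xpredT (fun l => Fs g s l x)).
rewrite (eq_bigr (fun l => Num.min x (curve_x_prev g s l.+1) - Num.min x (curve_x_prev g s l))); last first.
  by move=> l _; rewrite /Fs cx_prevS.
rewrite telescope_sumr // cx_full g1 cx_prev0.
by rewrite (min_l x1) (min_r x0) subr0.
Qed.

Lemma Fs_mono (g : 'I_d -> R) s l x y : (forall i, 0 <= g i) -> x <= y ->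
  Fs g s l x <= Fs g s l y.
Proof.
move=> g0 xy; have := cxp_le_cx s l g0; rewrite /Fs.
move: (curve_x g s l) (curve_x_prev g s l) => A B BA.
case: (min_cases x A) => [[-> h1]|[-> h1]]; case: (min_cases x B) => [[-> h2]|[-> h2]];
case: (min_cases y A) => [[-> h3]|[-> h3]]; case: (min_cases y B) => [[-> h4]|[-> h4]]; lra.
Qed.

Lemma Fs_1 (g : 'I_d -> R) s (l : 'I_d) : (forall i, 0 <= g i) -> \sum_i g i = 1 ->
  Fs g s l 1 = g (s l).
Proof.
move=> g0 g1.
have h1 : curve_x g s l <= 1 by rewrite -g1; apply: cx_le_sum.
have h2 : curve_x_prev g s l <= 1 by rewrite -g1; apply: cxp_le_sum.
rewrite /Fs (min_r h1) (min_r h2) cx_split; lra.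
Qed.

Lemma Fs_0 (g : 'I_d -> R) s l : (forall i, 0 <= g i) -> Fs g s l 0 = 0.
Proof.
by move=> g0; rewrite /Fs (min_l (cx_ge0 _ _ g0)) (min_l (cxp_ge0 _ _ g0)) subrr.
Qed.

Lemma curve_funE (g p : 'I_d -> R) s x :
  curve_fun g p s x = \sum_(l : 'I_d) p (s l) / g (s l) * Fs g s l x.
Proof. by []. Qed.

End Aux.


Section Knap.
Variables (R : realType) (d : nat).
Variables (g p : 'I_d -> R) (s : 'S_d).
Hypotheses (g0 : forall i, 0 < g i) (g1 : \sum_i g i = 1) (hs : is_beta_order g p s).
Variable w : 'I_d -> R.
Hypothesis w01 : forall j, 0 <= w j <= 1.

Let g0' : forall i, 0 <= g i. Proof. by move=> i; apply: ltW. Qed.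
Let x := \sum_j w j * g j.
Let rho (l : 'I_d) := p (s l) / g (s l).
Let u (l : 'I_d) := w (s l) * g (s l).
Let c (l : 'I_d) := Fs g s l x.

Lemma strict_sum (a b : 'I_d -> R) (l : 'I_d) :
  (forall n, b n <= a n) -> b l < a l -> \sum_n b n < \sum_n a n.
Proof.
move=> ba bl; rewrite (bigD1 l) //= [X in _ < X](bigD1 l) //=.
by apply: ltr_leD => //; apply: ler_sum => n _.
Qed.

Let x01 : 0 <= x <= 1.
Proof.
apply/andP; split; first by apply: sumr_ge0 => j _; case/andP: (w01 j) => ? ?; apply: mulr_ge0.
rewrite -g1; apply: ler_sum => j _; case/andP: (w01 j) => ? ?.
by rewrite ler_piMl.
Qed.

Let sum_u : \sum_l u l = x.
Proof. by rewrite /u (sum_perm (fun j => w j * g j)). Qed.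

Let sum_c : \sum_l c l = x.
Proof. by rewrite /c Fs_tele. Qed.

Let wp_eq : \sum_j w j * p j = \sum_l rho l * u l.
Proof.
rewrite -(sum_perm (fun j => w j * p j) s); apply: eq_bigr => l _.
rewrite /rho /u; have := g0 (s l); move: (g (s l)) => G G0.
by field; rewrite gt_eqF.
Qed.

Let cf_eq : curve_fun g p s x = \sum_l rho l * c l.
Proof. by []. Qed.

Let ex_m : exists m : 'I_d, x <= curve_x g s m /\
   forall n : nat, (n < m)%N -> curve_x g s n < x.
Proof.
have d0 : (0 < d)%N.
  case: (posnP d) => [d0'|//].
  have : \sum_i g i = 0 by apply: big1 => i; move: (ltn_ord i); rewrite [X in (_ < X)%N]d0'.
  by rewrite g1 => /eqP; rewrite oner_eq0.
pose P := fun n : nat => (n < d)%N && (x <= curve_x g s n).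
have exP : exists n, P n.
  exists d.-1; rewrite /P prednK // leqnn /=.
  rewrite -cx_prevS prednK // cx_full g1; by case/andP: x01.
case: (ex_minnP exP) => m /andP[md xm] mmin.
exists (Ordinal md); split => //= n nm.
rewrite ltNge; apply/negP => xn.
have : (m <= n)%N by apply: mmin; rewrite /P xn (ltn_trans nm md).
by rewrite leqNgt nm.
Qed.

Let theta_decomp (th : R) :
  \sum_l rho l * c l - \sum_l rho l * u l = \sum_l (rho l - th) * (c l - u l).
Proof.
have -> : \sum_l (rho l - th) * (c l - u l) =
   \sum_l (rho l * c l - rho l * u l) - th * \sum_l (c l - u l).
  rewrite mulr_sumr -sumrB; apply: eq_bigr => l _; ring.
by rewrite [X in th * X]sumrB sum_c sum_u subrr mulr0 subr0 sumrB.
Qed.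

Section WithM.
Variable m : 'I_d.
Hypothesis xm : x <= curve_x g s m.
Hypothesis mmin : forall n : nat, (n < m)%N -> curve_x g s n < x.

Let c_lt (l : 'I_d) : (l < m)%N -> c l = g (s l).
Proof.
move=> lm; have h1 := mmin lm.
have h2 : curve_x_prev g s l <= x by apply: le_trans (ltW h1); apply: cxp_le_cx.
rewrite /c /Fs (min_r (ltW h1)) (min_r h2) cx_split; lra.
Qed.

Let c_gt (l : 'I_d) : (m < l)%N -> c l = 0.
Proof.
move=> ml.
have h2 : x <= curve_x_prev g s l.
  apply: le_trans xm _; apply: sum_sub_le => // i im; exact: leq_ltn_trans im ml.
have h1 : x <= curve_x g s l by apply: le_trans h2 _; apply: cxp_le_cx.
by rewrite /c /Fs (min_l h1) (min_l h2) subrr.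
Qed.

Let rho_mono (l n : 'I_d) : (l <= n)%N -> rho n <= rho l.
Proof. exact: hs. Qed.

Let u_le (l : 'I_d) : 0 <= u l <= g (s l).
Proof.
case/andP: (w01 (s l)) => a b; rewrite /u; apply/andP; split.
  by apply: mulr_ge0.
by rewrite ler_piMl.
Qed.

Lemma term_ge0 (l : 'I_d) : 0 <= (rho l - rho m) * (c l - u l).
Proof.
case: (ltngtP l m) => lm.
- rewrite c_lt //; apply: mulr_ge0; first by rewrite subr_ge0 rho_mono // ltnW.
  by case/andP: (u_le l) => _ ?; rewrite subr_ge0.
- rewrite c_gt //; apply: mulr_le0; first by rewrite subr_le0 rho_mono // ltnW.
  by case/andP: (u_le l) => ? _; rewrite sub0r oppr_le0.
- have -> : l = m by apply: val_inj. by rewrite subrr mul0r.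
Qed.

Hypothesis greedy : forall j1 j2, 0 < w j2 -> w j1 < 1 -> p j1 / g j1 <= p j2 / g j2.

Lemma term_eq0 (l : 'I_d) : (rho l - rho m) * (c l - u l) = 0.
Proof.
case: (eqVneq (rho l) (rho m)) => [->|ne]; first by rewrite subrr mul0r.
apply/eqP; rewrite mulf_eq0; apply/orP; right.
case: (ltngtP l m) => lm.
- have rlt : rho m < rho l by rewrite lt_neqAle eq_sym ne rho_mono // ltnW.
  rewrite c_lt // subr_eq0 /u.
  case/andP: (w01 (s l)) => w0 w1.
  case: (eqVneq (w (s l)) 1) => [->|wne1]; first by rewrite mul1r.
  exfalso.
  have wl1 : w (s l) < 1 by rewrite lt_neqAle wne1.
  have wz : forall n : 'I_d, (m <= n)%N -> w (s n) = 0.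
    move=> n mn; case/andP: (w01 (s n)) => a _.
    case: (eqVneq (w (s n)) 0) => // nz.
    have pos : 0 < w (s n) by rewrite lt_neqAle eq_sym nz.
    have := greedy pos wl1; rewrite -/(rho l) -/(rho n) => h.
    have := rho_mono mn; lra.
  have : x < curve_x_prev g s m.
    rewrite -sum_u /curve_x_prev [X in _ < X]big_mkcond /=.
    apply: (@strict_sum _ _ l) => [n|].
      case: ifP => nm; first by case/andP: (u_le n).
      by rewrite /u wz ?mul0r // leqNgt nm.
    rewrite lm /u; have := g0 (s l); move: (g (s l)) => G G0.
    nra.
  case: (m) lm mmin => [[|m'] Hm] //= lm' mmin'.
  rewrite cx_prevS; have := mmin' m' (ltnSn m'); lra.
- have rlt : rho l < rho m by rewrite lt_neqAle ne rho_mono // ltnW.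
  rewrite c_gt // sub0r oppr_eq0 /u.
  case/andP: (w01 (s l)) => w0 w1.
  case: (eqVneq (w (s l)) 0) => [->|wne0]; first by rewrite mul0r.
  exfalso.
  have wl0 : 0 < w (s l) by rewrite lt_neqAle eq_sym wne0.
  have wo : forall n : 'I_d, (n <= m)%N -> w (s n) = 1.
    move=> n nm; case/andP: (w01 (s n)) => _ b.
    case: (eqVneq (w (s n)) 1) => // nz.
    have lt1 : w (s n) < 1 by rewrite lt_neqAle nz.
    have := greedy wl0 lt1; rewrite -/(rho l) -/(rho n) => h.
    have := rho_mono nm; lra.
  have : curve_x g s m < x.
    rewrite -sum_u /curve_x [X in X < _]big_mkcond /=.
    apply: (@strict_sum _ _ l) => [n|].
      case: ifP => nm; first by rewrite /u wo // mul1r.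
      by case/andP: (u_le n).
    rewrite leqNgt lm /=.
    by rewrite /u; apply: mulr_gt0.
  by move=> h; have := lt_le_trans h xm; rewrite ltxx.
- have e : l = m by apply: val_inj.
  by move: ne; rewrite e eqxx.
Qed.

End WithM.

Lemma knap : \sum_j w j * p j <= curve_fun g p s x.
Proof.
case: ex_m => m [xm mmin].
rewrite wp_eq cf_eq -subr_ge0 (theta_decomp (rho m)).
by apply: sumr_ge0 => l _; apply: term_ge0.
Qed.

Lemma greedy_eq :
  (forall j1 j2, 0 < w j2 -> w j1 < 1 -> p j1 / g j1 <= p j2 / g j2) ->
  \sum_j w j * p j = curve_fun g p s x.
Proof.
move=> gr; case: ex_m => m [xm mmin].
apply/eqP; rewrite eq_sym -subr_eq0 wp_eq cf_eq (theta_decomp (rho m)).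
by apply/eqP; apply: big1 => l _; apply: term_eq0.
Qed.

End Knap.


Lemma beta_order_ex (R : realType) (d : nat) (g f : 'I_d -> R) :
  exists s : 'S_d, is_beta_order g f s.
Proof.
pose key i := f i / g i.
pose leT := fun i j : 'I_d => key j <= key i.
have tr : transitive leT by move=> a b c h1 h2; exact: le_trans h2 h1.
have rf : reflexive leT by move=> a; exact: lexx.
have tot : total leT by move=> a b; exact: le_total.
pose sq := sort leT (enum 'I_d).
have sz : size sq = d by rewrite size_sort size_enum_ord.
have un : uniq sq by rewrite sort_uniq enum_uniq.
have so : sorted leT sq by apply: sort_sorted.
pose h := fun i : 'I_d => nth i sq i.
have hE : forall (i : 'I_d) (x0 : 'I_d), h i = nth x0 sq i.
  by move=> i x0; rewrite /h (set_nth_default x0) // sz.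
have hinj : injective h.
  move=> i j; rewrite (hE i i) (hE j i) => /eqP; rewrite nth_uniq ?sz // => /eqP.
  exact: val_inj.
exists (perm hinj) => i j ij; rewrite !permE (hE i i) (hE j i).
by apply: (sorted_leq_nth tr rf) => //; rewrite inE sz.
Qed.


Section Lift.
Variables (R : realType) (d : nat).
Variables (g p r : 'I_d -> R) (pi sg : 'S_d).
Hypotheses (g0 : forall i, 0 < g i) (g1 : \sum_i g i = 1).
Hypothesis hr : forall m : 'I_d, r (sg m) =
  curve_fun g p pi (curve_x g sg m) - curve_fun g p pi (curve_x_prev g sg m).

Let g0' : forall i, 0 <= g i. Proof. by move=> i; apply: ltW. Qed.

Let X (a : 'I_d) := curve_x g sg ((sg^-1)%g a).
Let X' (a : 'I_d) := curve_x_prev g sg ((sg^-1)%g a).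

Let Tm : 'M[R]_d := \matrix_(a, b)
  ((Fs g pi ((pi^-1)%g b) (X a) - Fs g pi ((pi^-1)%g b) (X' a)) / g b).

Let X01 a : 0 <= X a <= 1.
Proof. by rewrite cx_ge0 //= -g1 cx_le_sum. Qed.
Let X'01 a : 0 <= X' a <= 1.
Proof. by rewrite cxp_ge0 //= -g1 cxp_le_sum. Qed.

Let Tnn a b : 0 <= Tm a b.
Proof.
rewrite mxE; apply: divr_ge0 => //; rewrite subr_ge0; apply: Fs_mono => //.
exact: cxp_le_cx.
Qed.

Let Tcol b : \sum_a Tm a b = 1.
Proof.
rewrite -(sum_perm (fun a => Tm a b) sg).
rewrite (eq_bigr (fun m : 'I_d => (Fs g pi ((pi^-1)%g b) (curve_x_prev g sg m.+1) -
    Fs g pi ((pi^-1)%g b) (curve_x_prev g sg m)) / g b)); last first.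
  by move=> m _; rewrite mxE /X /X' permK cx_prevS.
rewrite -mulr_suml.
rewrite -(big_mkord xpredT (fun m => Fs g pi ((pi^-1)%g b) (curve_x_prev g sg m.+1) -
    Fs g pi ((pi^-1)%g b) (curve_x_prev g sg m))).
rewrite telescope_sumr // cx_full g1 cx_prev0 Fs_1 // Fs_0 // subr0 permKV.
by rewrite divff // gt_eqF.
Qed.

Let Tg a : mxapp Tm g a = g a.
Proof.
rewrite /mxapp (eq_bigr (fun b => Fs g pi ((pi^-1)%g b) (X a) - Fs g pi ((pi^-1)%g b) (X' a))); last first.
  move=> b _; rewrite mxE; have := g0 b; move: (g b) => G G0; field; by rewrite gt_eqF.
rewrite sumrB -(sum_perm (fun b => Fs g pi ((pi^-1)%g b) (X a)) pi).
rewrite -(sum_perm (fun b => Fs g pi ((pi^-1)%g b) (X' a)) pi).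
rewrite (eq_bigr (fun l : 'I_d => Fs g pi l (X a))); last by move=> l _; rewrite permK.
rewrite [X in _ - X](eq_bigr (fun l : 'I_d => Fs g pi l (X' a))); last by move=> l _; rewrite permK.
rewrite !Fs_tele // /X /X' cx_split permKV; lra.
Qed.

Let Tp a : mxapp Tm p a = r a.
Proof.
have e := hr ((sg^-1)%g a); rewrite permKV in e; rewrite e -/(X a) -/(X' a).
rewrite /mxapp -(sum_perm (fun b => Tm a b * p b) pi) !curve_funE -sumrB.
apply: eq_bigr => l _; rewrite mxE permK; ring.
Qed.

Lemma lift_in_orbit : TP_orbit g p r.
Proof.
exists Tm; split; last by move=> i; rewrite Tp.
by split.
Qed.

End Lift.


Section Gen.
Variables (R : realType) (d : nat).

Definition del (x y : 'I_d) : R := if x == y then 1 else 0.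


Lemma sum_del (i : 'I_d) (f : 'I_d -> R) : \sum_n del n i * f n = f i.
Proof.
rewrite (bigD1 i) //= /del eqxx mul1r big1 ?addr0 // => n /negbTE ->; by rewrite mul0r.
Qed.

Lemma sum_del' (i : 'I_d) (f : 'I_d -> R) : \sum_n del i n * f n = f i.
Proof.
rewrite -(sum_del i f); apply: eq_bigr => n _; by rewrite /del eq_sym.
Qed.

Lemma sum_del1 (i : 'I_d) : \sum_n del n i = 1.
Proof. by rewrite -(sum_del i (fun _ => 1)); apply: eq_bigr => n _; rewrite mulr1. Qed.

Lemma mxapp_mul (A B : 'M[R]_d) f i : mxapp (A *m B) f i = mxapp A (mxapp B f) i.
Proof.
rewrite /mxapp; under eq_bigr do rewrite mxE mulr_suml.
rewrite exchange_big; apply: eq_bigr => k _; rewrite mulr_sumr.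
by apply: eq_bigr => j _; rewrite mulrA.
Qed.

Lemma TP_mul (g : 'I_d -> R) (A B : 'M[R]_d) : is_TP g A -> is_TP g B -> is_TP g (A *m B).
Proof.
case=> A0 A1 Ag [B0 B1 Bg]; split.
- by move=> i j; rewrite mxE; apply: sumr_ge0 => k _; apply: mulr_ge0.
- move=> j; under eq_bigr do rewrite mxE.
  rewrite exchange_big /= -(B1 j); apply: eq_bigr => k _.
  by rewrite -mulr_suml A1 mul1r.
- move=> i; rewrite mxapp_mul -Ag; apply: eq_bigr => j _; by rewrite Bg.
Qed.

Lemma pos_sum_ex (P : pred 'I_d) (F : 'I_d -> R) :
  0 < \sum_(i | P i) F i -> exists i, P i /\ 0 < F i.
Proof.
move=> h; case: (pickP (fun i => P i && (0 < F i))) => [i /andP[? ?]|no].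
  by exists i.
exfalso; have : \sum_(i | P i) F i <= 0.
  apply: sumr_le0 => i Pi; move: (no i); rewrite Pi /= => /negbT; by rewrite -leNgt.
by rewrite leNgt h.
Qed.

End Gen.
Arguments del {R d}.


Ltac des :=
  repeat first
   [ match goal with H : is_true (?x != ?x) |- _ => by rewrite eqxx in H end
   | match goal with H : (?x == ?x) = false |- _ => by rewrite eqxx in H end
   | rewrite eqxx /=
   | match goal with H : is_true (?x != ?y) |- context [?x == ?y] => rewrite (negbTE H) /= end
   | match goal with H : is_true (?x != ?y) |- context [?y == ?x] => rewrite eq_sym (negbTE H) /= end
   | match goal with |- context [?x == ?y] => case: (eqVneq x y) => [?|?]; subst end ].

Section NoInv.
Variables (R : realType) (d : nat).
Variables (g p r : 'I_d -> R) (T : 'M[R]_d).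
Hypotheses (g0 : forall i, 0 < g i) (hT : is_TP g T)
  (hrT : forall i, r i = mxapp T p i)
  (ext : is_extreme_point (TP_orbit g p) r).

Lemma noinv (a a' j1 j2 : 'I_d) : a != a' -> r a' / g a' <= r a / g a ->
  0 < T a' j1 -> 0 < T a j2 -> p j1 / g j1 <= p j2 / g j2.
Proof.
move=> aa' hra Ta' Ta.
rewrite leNgt; apply/negP => hlt.
have j12 : (j1 == j2) = false.
  by apply/negbTE; apply/eqP => e; move: hlt; rewrite e ltxx.
have j21 : (j2 == j1) = false by rewrite eq_sym.
have aa : (a == a') = false by apply/negbTE.
have a'a : (a' == a) = false by rewrite eq_sym.
case: hT => T0 T1c Tg.
have ga := g0 a; have ga' := g0 a'; have gj1 := g0 j1; have gj2 := g0 j2.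
pose uu n : R := del n a - del n a'.
pose vv b : R := del b j1 / g j1 - del b j2 / g j2.
pose C := p j1 / g j1 - p j2 / g j2.
have C0 : 0 < C by rewrite /C subr_gt0.
pose eps := Num.min (T a' j1 * g j1) (T a j2 * g j2).
have eps0 : 0 < eps by rewrite lt_min; apply/andP; split; apply: mulr_gt0.
have e1 : eps / g j1 <= T a' j1.
  by rewrite ler_pdivrMr // ge_min lexx.
have e2 : eps / g j2 <= T a j2.
  by rewrite ler_pdivrMr // ge_min lexx orbT.
have sum_uu : \sum_n uu n = 0 by rewrite sumrB !sum_del1 subrr.
have sum_vv : forall f, \sum_b vv b * f b = f j1 / g j1 - f j2 / g j2.
  move=> f; rewrite (eq_bigr (fun b => del b j1 * (f b / g j1) - del b j2 * (f b / g j2))).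
    by rewrite sumrB !sum_del.
  by move=> b _; rewrite /vv; ring.
pose T1 : 'M[R]_d := \matrix_(n, b) (T n b + eps * (uu n * vv b)).
have T1app : forall f n, mxapp T1 f n = mxapp T f n + eps * uu n * (f j1 / g j1 - f j2 / g j2).
  move=> f n; rewrite /mxapp -sum_vv mulr_sumr -big_split /=.
  by apply: eq_bigr => b _; rewrite mxE; ring.
have T1TP : is_TP g T1.
  split.
  - move=> n b; rewrite mxE /uu /vv /del.
    have iv1 : 0 < (g j1)^-1 by rewrite invr_gt0.
    have iv2 : 0 < (g j2)^-1 by rewrite invr_gt0.
    have := T0 n b.
    clear -aa' aa a'a j12 j21 e1 e2 iv1 iv2 eps0 T0 Ta Ta'; move: (T0 n b) => Tnb.
    des; nra.
  - move=> b; rewrite (eq_bigr (fun n => T n b + (eps * vv b) * uu n)).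
      by rewrite big_split /= -mulr_sumr sum_uu mulr0 addr0 T1c.
    by move=> n _; rewrite mxE; ring.
  - move=> n; rewrite T1app Tg divff ?divff ?subrr ?mulr0 ?addr0 //; by rewrite gt_eqF.
pose x := mxapp T1 p.
have Hx : TP_orbit g p x by exists T1; split.
pose k := Num.min (g a)^-1 (g a')^-1.
have k0 : 0 < k by rewrite lt_min !invr_gt0 ga ga'.
have ka : k * g a <= 1.
  by rewrite -ler_pdivlMr // div1r /k ge_min lexx.
have ka' : k * g a' <= 1.
  by rewrite -ler_pdivlMr // div1r /k ge_min lexx orbT.
have kgt : 1 < k * (g a + g a').
  rewrite /k; case: (lerP (g a)^-1 (g a')^-1) => h.
    rewrite mulrDr mulVf ?(gt_eqF ga) // ltrDl; apply: mulr_gt0; by rewrite ?invr_gt0.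
  rewrite mulrDr [_ * g a']mulVf ?(gt_eqF ga') // ltrDr; apply: mulr_gt0; by rewrite ?invr_gt0.
pose s := k * g a'.
pose t := k * g a.
pose ww b : R := - s * del b a + t * del b a'.
have sum_ww : forall f, \sum_b ww b * f b = - s * f a + t * f a'.
  move=> f; rewrite (eq_bigr (fun b => del b a * (- s * f b) + del b a' * (t * f b))).
    by rewrite big_split /= !sum_del.
  by move=> b _; rewrite /ww; ring.
pose M : 'M[R]_d := \matrix_(n, b) (del n b + uu n * ww b).
have Mapp : forall f n, mxapp M f n = f n + uu n * (- s * f a + t * f a').
  move=> f n; rewrite /mxapp -sum_ww mulr_sumr -(sum_del' n f) -big_split /=.
  by apply: eq_bigr => b _; rewrite mxE; ring.
have MTP : is_TP g M.
  split.
  - move=> n b; rewrite mxE /uu /ww /del.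
    rewrite /s /t in ka ka' *.
    have := mulr_gt0 k0 ga; have := mulr_gt0 k0 ga'.
    clear -aa' aa a'a ka ka'; move=> h1 h2.
    des; lra.
  - move=> b; rewrite (eq_bigr (fun n => del n b + ww b * uu n)).
      by rewrite big_split /= -mulr_sumr sum_uu mulr0 addr0 sum_del1.
    by move=> n _; rewrite mxE; ring.
  - move=> n; rewrite Mapp /s /t.
    have -> : - (k * g a') * g a + k * g a * g a' = 0 by ring.
    by rewrite mulr0 addr0.
pose y := mxapp (M *m T1) p.
have Hy : TP_orbit g p y by exists (M *m T1); split => //; apply: TP_mul.
pose al := eps * C.
have xE : forall n, x n = r n + al * uu n.
  by move=> n; rewrite /x T1app -hrT /al -/C; ring.
have ua : uu a = 1 by rewrite /uu /del eqxx aa subr0.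
have ua' : uu a' = -1 by rewrite /uu /del eqxx a'a sub0r.
pose be := al + (- s * x a + t * x a').
have yE : forall n, y n = r n + be * uu n.
  by move=> n; rewrite /y mxapp_mul Mapp -/x xE /be; ring.
have al0 : 0 < al by apply: mulr_gt0.
pose ra := r a / g a.
pose ra' := r a' / g a'.
have raE : r a = ra * g a by rewrite /ra divfK ?gt_eqF.
have raE' : r a' = ra' * g a' by rewrite /ra' divfK ?gt_eqF.
have be0 : be < 0.
  have h1 : 0 <= k * g a * g a' * (ra - ra').
    apply: mulr_ge0; last by rewrite subr_ge0.
    by apply: mulr_ge0; [apply: mulr_ge0; apply: ltW|apply: ltW].
  have h2 : be = al * (1 - k * (g a + g a')) - k * g a * g a' * (ra - ra').
    by rewrite /be !xE ua ua' /s /t raE raE'; ring.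
  have h3 : al * (1 - k * (g a + g a')) < 0.
    by rewrite pmulr_rlt0 // subr_lt0.
  rewrite h2; lra.
pose t0 := - be / (al - be).
have dpos : 0 < al - be by lra.
have t00 : 0 < t0 by apply: divr_gt0 => //; lra.
have t01 : t0 < 1 by rewrite ltr_pdivrMr // mul1r; lra.
have comb : forall n, r n = t0 * x n + (1 - t0) * y n.
  move=> n; rewrite xE yE /t0; field; by rewrite gt_eqF.
have := ext.2 x y Hx Hy t0 t00 t01 comb a.
rewrite xE yE ua !mulr1 => /addrI e.
by move: al0 be0; rewrite e; lra.
Qed.

End NoInv.


Section Main.
Variables (R : realType) (d : nat).
Variables (g p : 'I_d -> R).
Hypotheses (g0 : forall i, 0 < g i) (g1 : \sum_i g i = 1) (hp : is_state p).

Let g0' : forall i, 0 <= g i. Proof. by move=> i; apply: ltW. Qed.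

Lemma wsum01 (T : 'M[R]_d) (s : 'S_d) (k : nat) : is_TP g T ->
  forall j, 0 <= \sum_(i : 'I_d | (i <= k)%N) T (s i) j <= 1.
Proof.
case=> T0 T1 _ j; apply/andP; split; first by apply: sumr_ge0.
rewrite -(T1 j) -(sum_perm (fun i => T i j) s).
by apply: sum_sub_le.
Qed.

Lemma wsumE (T : 'M[R]_d) (s : 'S_d) (k : nat) (f : 'I_d -> R) :
  \sum_j (\sum_(i : 'I_d | (i <= k)%N) T (s i) j) * f j = curve_x (mxapp T f) s k.
Proof.
under eq_bigr do rewrite mulr_suml.
by rewrite exchange_big.
Qed.

Lemma wsum_g (T : 'M[R]_d) (s : 'S_d) (k : nat) : is_TP g T ->
  \sum_j (\sum_(i : 'I_d | (i <= k)%N) T (s i) j) * g j = curve_x g s k.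
Proof.
case=> _ _ Tg; rewrite wsumE; apply: eq_bigr => i _; exact: Tg.
Qed.

Lemma cf_1 (pi : 'S_d) : curve_fun g p pi 1 = 1.
Proof.
case: hp => _ ps; rewrite -[RHS]ps curve_funE -(sum_perm p pi); apply: eq_bigr => l _.
rewrite Fs_1 // divfK //; by rewrite gt_eqF.
Qed.

Lemma cf_0 (pi : 'S_d) : curve_fun g p pi 0 = 0.
Proof. by rewrite curve_funE big1 // => l _; rewrite Fs_0 // mulr0. Qed.

Lemma orbit_le (z : 'I_d -> R) (s pi : 'S_d) (k : nat) :
  is_beta_order g p pi -> TP_orbit g p z ->
  curve_x z s k <= curve_fun g p pi (curve_x g s k).
Proof.
move=> hpi [T [hT hz]].
have -> : curve_x z s k = curve_x (mxapp T p) s k by apply: eq_bigr => i _.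
rewrite -wsumE -(wsum_g s k hT).
by apply: knap => //; apply: wsum01.
Qed.

Lemma cx_last (f : 'I_d -> R) (s : 'S_d) (m : nat) : m.+1 = d ->
  curve_x f s m = \sum_i f i.
Proof. by move=> e; rewrite -cx_prevS e cx_full. Qed.

Lemma fwd (r : 'I_d -> R) : is_extreme_point (TP_orbit g p) r ->
  tightly_thermomajorizes g p r.
Proof.
move=> ext; case: (ext) => [[T [hT hrT]] _].
move=> s hs k hk pi hpi.
have -> : curve_y r s k = curve_x (mxapp T p) s k by apply: eq_bigr => i _.
rewrite -wsumE -(wsum_g s k hT).
apply: greedy_eq => //; first by apply: wsum01.
move=> j1 j2 w2 w1.
case: (pos_sum_ex w2) => i [ik Ti].
have w1' : 0 < \sum_(i : 'I_d | ~~ (i <= k)%N) T (s i) j1.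
  case: (hT) => _ T1 _.
  move: w1; rewrite -[X in _ < X](T1 j1) -(sum_perm (fun i => T i j1) s).
  rewrite [X in _ < X](bigID (fun i : 'I_d => (i <= k)%N)) /=; lra.
case: (pos_sum_ex w1') => i' [ik' Ti'].
apply: (noinv g0 hT hrT ext (a := s i) (a' := s i')) => //.
  rewrite (inj_eq (@perm_inj _ s)); apply/eqP => e; move: ik'; by rewrite -e ik.
apply: hs; apply: leq_trans ik _; apply: ltnW; by rewrite ltnNge.
Qed.

Lemma bwd (r : 'I_d -> R) : is_state r -> tightly_thermomajorizes g p r ->
  is_extreme_point (TP_orbit g p) r.
Proof.
move=> hr tt.
case: (beta_order_ex g r) => s hs.
case: (beta_order_ex g p) => pi hpi.
have tight : forall m : nat, (m < d)%N ->
    curve_x r s m = curve_fun g p pi (curve_x g s m).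
  move=> m md; case: (ltnP m.+1 d) => h.
    exact: tt s hs m h pi hpi.
  have e : m.+1 = d by apply/eqP; rewrite eqn_leq md h.
  by rewrite !cx_last // g1 cf_1; case: hr.
have tightp : forall m : nat, (m < d)%N ->
    curve_x_prev r s m = curve_fun g p pi (curve_x_prev g s m).
  case=> [|m] md; first by rewrite !cx_prev0 cf_0.
  by rewrite !cx_prevS tight // ltnW.
split.
  apply: (@lift_in_orbit _ _ g p r pi s g0 g1) => m.
  have := cx_split r s m; rewrite tight // tightp //; lra.
move=> x y Hx Hy t t0 t1 comb.
have eqc : forall m : nat, (m < d)%N -> curve_x x s m = curve_x y s m.
  move=> m md.
  have hx := orbit_le s m hpi Hx.
  have hy := orbit_le s m hpi Hy.
  have hc : curve_x r s m = t * curve_x x s m + (1 - t) * curve_x y s m.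
    rewrite /curve_x mulr_sumr mulr_sumr -big_split /=.
    by apply: eq_bigr => i _; rewrite comb.
  move: hc; rewrite tight // => hc.
  move: hx hy hc; set V := curve_fun _ _ _ _; set X := curve_x x s m;
    set Y := curve_x y s m => hx hy hc.
  nra.
have eqcp : forall m : nat, (m < d)%N -> curve_x_prev x s m = curve_x_prev y s m.
  case=> [|m] md; first by rewrite !cx_prev0.
  by rewrite !cx_prevS eqc // ltnW.
move=> i; rewrite -(permKV s i).
have hx := cx_split x s ((s^-1)%g i); have hy := cx_split y s ((s^-1)%g i).
rewrite eqc // eqcp // in hx; lra.
Qed.

End Main.

Unset Implicit Arguments.

Theorem mainTheorem2 (R : realType) (d : nat) (hd : (2 <= d)%N)
  (beta : R) (hbeta : 0 < beta)
  (E : 'I_d -> R) (i0 : 'I_d) (hi0 : nat_of_ord i0 = 0%N) (hE0 : E i0 = 0)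
  (hEinj : injective E)
  (p r : 'I_d -> R) (hp : is_state p) (hr : is_state r) :
  is_extreme_point (TP_orbit (gibbs beta E i0) p) r <->
  tightly_thermomajorizes (gibbs beta E i0) p r.
Proof.
have Z0 : 0 < \sum_(j : 'I_d) qfac beta E j i0.
  apply: (lt_le_trans (expR_gt0 (- (beta * (E i0 - E i0))))).
  rewrite (bigD1 i0) //= lerDl; apply: sumr_ge0 => j _; apply: ltW; apply: expR_gt0.
have g0 : forall i, 0 < gibbs beta E i0 i.
  by move=> i; apply: divr_gt0 => //; apply: expR_gt0.
have g1 : \sum_i gibbs beta E i0 i = 1.
  by rewrite /gibbs -mulr_suml divff // gt_eqF.
split; [apply: fwd | apply: bwd] => //.
Qed.
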